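(* Let $\mathsf{L}$ be a logic, $\mathcal{C}$ a class of $\mathsf{L}$-models, and $\Theta$ an $(\mathsf{L},\mathcal{C})$-pair (with, for each $M\in\mathcal{C}$, fixed functions $\mathsf{sem}^o_M$ witnessing the inductive property and a fixed set $\mathsf{SAT}_M$ as described in the context). Then the semantic enumeration procedure described in the context, run on a $\mathcal{C}$-sample $\mathcal{S}=(\mathcal{P},\mathcal{N})$, accepts if and only if $\mathcal{S}$ is $\mathsf{L}$-separable; that is, it decides the passive learning problem $\mathsf{PvLn}(\mathsf{L},\mathcal{C})$.
   Context: A logic $\mathsf{L}$ is given by a syntax $(\mathcal{T},\mathcal{T}_f,\mathsf{Op},(\tau_o)_{o\in\mathsf{Op}},T)$: $\mathcal{T}$ a non-empty finite set of types, $\emptyset\neq\mathcal{T}_f\subseteq\mathcal{T}$ final types, $\mathsf{Op}=\mathsf{Op}_0\uplus\mathsf{Op}_1\uplus\mathsf{Op}_2$ operators of arity 0,1,2 with $\mathsf{Op}_0\ne\emptyset$, each $o$ with a type $\tau_o\in\mathcal{T}$ and sets $T(o,i)\subseteq\mathcal{T}$ of allowed argument types. Formulas of type $\tau$, $\mathsf{Fm}_{\mathsf{L}}(\tau)$, are built inductively: $o\in\mathsf{Op}_0$ has type $\tau_o$; $o(\varphi_1)$ (resp. $o(\varphi_1,\varphi_2)$) has type $\tau_o$ when each $\varphi_i$ has a type in $T(o,i)$. $\mathsf{Fm}_{\mathsf{L}}(X)=\bigcup_{\tau\in X}\mathsf{Fm}_{\mathsf{L}}(\tau)$; final formulas are $\mathsf{Fm}^f_{\mathsf{L}}=\mathsf{Fm}_{\mathsf{L}}(\mathcal{T}_f)$.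 An $\mathsf{L}$-model $M$ has a satisfaction relation $M\models\varphi$ for final formulas; a class of $\mathsf{L}$-models is a set of them. A $\mathcal{C}$-sample is a pair $(\mathcal{P},\mathcal{N})$ of finite subsets of $\mathcal{C}$; it is $\mathsf{L}$-separable if some final formula $\varphi$ has $M\models\varphi$ for all $M\in\mathcal{P}$ and $M\not\models\varphi$ for all $M\in\mathcal{N}$. $\mathsf{PvLn}(\mathsf{L},\mathcal{C})$: given a $\mathcal{C}$-sample, decide whether it is $\mathsf{L}$-separable. An $(\mathsf{L},M)$-pair $(\mathsf{SEM}_M,\mathsf{sem}_M)$: a finite set $\mathsf{SEM}_M=\bigcup_\tau\mathsf{SEM}_M(\tau)$ (pairwise disjoint parts) and $\mathsf{sem}_M:\mathsf{Fm}_{\mathsf{L}}\to\mathsf{SEM}_M$ mapping type-$\tau$ formulas into $\mathsf{SEM}_M(\tau)$; $\mathsf{SEM}_M(X)=\bigcup_{\tau\in X}\mathsf{SEM}_M(\tau)$. It captures the $\mathsf{L}$-semantics if for all $\tau$ and all final $\varphi,\varphi'$ of type $\tau$ with $\mathsf{sem}_M(\varphi)=\mathsf{sem}_M(\varphi')$ we have $M\models\varphi$ iff $M\models\varphi'$; in that case fix a subset $\mathsf{SAT}_M\subseteq\mathsf{SEM}_M$ such that for every final $\varphi$, $M\models\varphi$ iff $\mathsf{sem}_M(\varphi)\in\mathsf{SAT}_M$. It satisfies the inductive property if for each $o\in\mathsf{Op}_1$ there is $\mathsf{sem}^o_M:\mathsf{SEM}_M(T(o,1))\to\mathsf{SEM}_M(\tau_o)$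 with $\mathsf{sem}_M(o(\varphi_1))=\mathsf{sem}^o_M(\mathsf{sem}_M(\varphi_1))$ for all $\varphi_1\in\mathsf{Fm}_{\mathsf{L}}(T(o,1))$, and for each $o\in\mathsf{Op}_2$ there is $\mathsf{sem}^o_M:\mathsf{SEM}_M(T(o,1))\times\mathsf{SEM}_M(T(o,2))\to\mathsf{SEM}_M(\tau_o)$ with $\mathsf{sem}_M(o(\varphi_1,\varphi_2))=\mathsf{sem}^o_M(\mathsf{sem}_M(\varphi_1),\mathsf{sem}_M(\varphi_2))$; fix such functions. An $(\mathsf{L},\mathcal{C})$-pair is a family $(\Theta_M)_{M\in\mathcal{C}}$ of $(\mathsf{L},M)$-pairs each capturing the $\mathsf{L}$-semantics and satisfying the inductive property. The procedure on input $\mathcal{S}=(\mathcal{P},\mathcal{N})$ (with $\mathcal{S}$ identified with $\mathcal{P}\cup\mathcal{N}$): start with the set $R$ of pairs $((\mathsf{sem}_M(o))_{M\in\mathcal{S}},\tau_o)$ for $o\in\mathsf{Op}_0$; repeatedly, until $R$ no longer changes, add for every $o\in\mathsf{Op}_1$ and every $(X,\tau_1)\in R$ with $\tau_1\in T(o,1)$ the pair $((\mathsf{sem}^o_M(X[M]))_{M\in\mathcal{S}},\tau_o)$, and for every $o\in\mathsf{Op}_2$ and all $(X_1,\tau_1),(X_2,\tau_2)\in R$ with $\tau_i\in T(o,i)$ the pair $((\mathsf{sem}^o_M(X_1[M],X_2[M]))_{M\in\mathcal{S}},\tau_o)$. Finally, accept iff there is $(X,\tau)\in R$ with $\tau\in\mathcal{T}_f$,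 $X[M]\in\mathsf{SAT}_M$ for all $M\in\mathcal{P}$ and $X[M]\in\mathsf{SEM}_M\setminus\mathsf{SAT}_M$ for all $M\in\mathcal{N}$; otherwise reject. *)

(* Defs.v *)
From mathcomp Require Import all_boot.
From Stdlib Require List.

Set Implicit Arguments.
Unset Strict Implicit.
Unset Printing Implicit Defensive.

(* Op = Op0 (+) Op1 (+) Op2 is given by three separate carrier types.  *)
Record logic := Logic {
  ty : finType;
  final : {set ty};
  final_nonempty : final != set0;
  Op0 : Type; Op1 : Type; Op2 : Type;
  Op0_nonempty : inhabited Op0;
  tau0 : Op0 -> ty; tau1 : Op1 -> ty; tau2 : Op2 -> ty;
  T1 : Op1 -> {set ty};
  T21 : Op2 -> {set ty};
  T22 : Op2 -> {set ty}
}.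

Inductive form (L : logic) : Type :=
| FOp0 : Op0 L -> form L
| FOp1 : Op1 L -> form L -> form L
| FOp2 : Op2 L -> form L -> form L -> form L.

Definition fty (L : logic) (f : form L) : ty L :=
  match f with
  | FOp0 o => tau0 o
  | FOp1 o _ => tau1 o
  | FOp2 o _ _ => tau2 o
  end.

Fixpoint wf (L : logic) (f : form L) : bool :=
  match f with
  | FOp0 _ => true
  | FOp1 o g => wf g && (fty g \in T1 o)
  | FOp2 o g h => [&& wf g, fty g \in T21 o, wf h & fty h \in T22 o]
  end.

Definition is_fm (L : logic) (f : form L) (t : ty L) : Prop :=
  wf f /\ fty f = t.

Definition is_final (L : logic) (f : form L) : Prop :=
  wf f /\ fty f \in final L.

(* SEM_M is a finite type; its partition into SEM_M(tau) is given by   *)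
(* semty : SEM_M -> T  (SEM_M(tau) = [set x | semty x == tau]).        *)
(* sem^o_M are total functions, constrained on their domain            *)
(* SEM_M(T(o,i)) only.                                                 *)
Record LMpair (L : logic) := LMPair {
  SEM : finType;
  semty : SEM -> ty L;
  sem : form L -> SEM;
  SAT : {set SEM};
  sem1 : Op1 L -> SEM -> SEM;
  sem2 : Op2 L -> SEM -> SEM -> SEM
}.
Arguments SEM {L} l.
Arguments semty {L} l _.
Arguments sem {L} l _.
Arguments SAT {L} l.
Arguments sem1 {L} l _ _.
Arguments sem2 {L} l _ _ _.

Definition LMpair_ok (L : logic) (Model : Type)
  (sat : Model -> form L -> Prop) (M : Model) (p : LMpair L) : Prop :=
  (forall f t, is_fm f t -> semty p (sem p f) = t) /\
  (forall f f' t, is_final f -> is_final f' -> is_fm f t -> is_fm f' t ->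
      sem p f = sem p f' -> (sat M f <-> sat M f')) /\
  (forall f, is_final f -> (sat M f <-> sem p f \in SAT p)) /\
  (forall o x, semty p x \in T1 o -> semty p (sem1 p o x) = tau1 o) /\
  (forall o f, wf f -> fty f \in T1 o ->
      sem p (FOp1 o f) = sem1 p o (sem p f)) /\
  (forall o x y, semty p x \in T21 o -> semty p y \in T22 o ->
      semty p (sem2 p o x y) = tau2 o) /\
  (forall o f g, wf f -> fty f \in T21 o -> wf g -> fty g \in T22 o ->
      sem p (FOp2 o f g) = sem2 p o (sem p f) (sem p g)).

Definition LCpair (L : logic) (Model : Type) (sat : Model -> form L -> Prop)
  (C : Model -> Prop) (Theta : Model -> LMpair L) : Prop :=
  forall M, C M -> LMpair_ok sat M (Theta M).

Definition sample (Model : Type) (C : Model -> Prop) (P N : seq Model) : Prop :=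
  (forall M, List.In M P -> C M) /\ (forall M, List.In M N -> C M).

Definition separable (L : logic) (Model : Type) (sat : Model -> form L -> Prop)
  (P N : seq Model) : Prop :=
  exists f, is_final f /\ (forall M, List.In M P -> sat M f) /\
                          (forall M, List.In M N -> ~ sat M f).

(* The sample S = P u N is enumerated as the list s := P ++ N; a tuple *)
(* X assigns to each position i of s an element of SEM_{s_i}.          *)
(* InR is the final value of R: the least set containing the initial   *)
(* pairs and closed under the two saturation rules (= the limit of the *)
(* "repeat until R no longer changes" loop).                           *)
Definition smodel (Model : Type) (s : seq Model) (i : 'I_(size s)) : Model :=
  tnth (in_tuple s) i.

Definition semtuple (L : logic) (Model : Type) (Theta : Model -> LMpair L)
  (s : seq Model) : Type :=
  forall i : 'I_(size s), SEM (Theta (smodel i)).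

Inductive InR (L : logic) (Model : Type) (Theta : Model -> LMpair L)
  (s : seq Model) : semtuple Theta s -> ty L -> Prop :=
| InR0 (o : Op0 L) :
    InR (fun i => sem (Theta (smodel i)) (FOp0 o)) (tau0 o)
| InR1 (o : Op1 L) (X : semtuple Theta s) (t : ty L) :
    InR X t -> t \in T1 o ->
    InR (fun i => sem1 (Theta (smodel i)) o (X i)) (tau1 o)
| InR2 (o : Op2 L) (X1 X2 : semtuple Theta s) (t1 t2 : ty L) :
    InR X1 t1 -> t1 \in T21 o -> InR X2 t2 -> t2 \in T22 o ->
    InR (fun i => sem2 (Theta (smodel i)) o (X1 i) (X2 i)) (tau2 o).

(* acceptance: positions i < size P are the models of P, the others of N *)
Definition accepts (L : logic) (Model : Type) (Theta : Model -> LMpair L)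
  (P N : seq Model) : Prop :=
  exists (X : semtuple Theta (P ++ N)) (t : ty L),
    InR X t /\ t \in final L /\
    (forall i : 'I_(size (P ++ N)),
        if (i < size P)%N then X i \in SAT (Theta (smodel i))
        else X i \notin SAT (Theta (smodel i))).

(* Main.v *)
Require Import Defs.
From mathcomp Require Import all_boot.
From Stdlib Require List.
From mathcomp Require Import zify.
Set Implicit Arguments.

Fixpoint evalX (L : logic) (Model : Type) (Theta : Model -> LMpair L)
  (s : seq Model) (f : form L) : semtuple Theta s :=
  match f with
  | FOp0 o => fun i => sem (Theta (smodel i)) (FOp0 o)
  | FOp1 o g => fun i => sem1 (Theta (smodel i)) o (evalX Theta s g i)
  | FOp2 o g h => fun i => sem2 (Theta (smodel i)) o (evalX Theta s g i) (evalX Theta s h i)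
  end.

Lemma evalX_InR (L : logic) (Model : Type) (Theta : Model -> LMpair L)
  (s : seq Model) (f : form L) : wf f -> InR (evalX Theta s f) (fty f).
Proof.
elim: f => [o|o g IH|o g IHg h IHh] /=.
- move=> _; exact: InR0.
- case/andP=> wg tg; exact: (InR1 (IH wg) tg).
- case/and4P=> wg tg wh th; exact: (InR2 (IHg wg) tg (IHh wh) th).
Qed.

Lemma evalX_sem (L : logic) (Model : Type) (sat : Model -> form L -> Prop)
  (C : Model -> Prop) (Theta : Model -> LMpair L)
  (HTheta : LCpair sat C Theta) (s : seq Model)
  (Hs : forall i : 'I_(size s), C (smodel i)) (f : form L) :
  wf f -> forall i, evalX Theta s f i = sem (Theta (smodel i)) f.
Proof.
elim: f => [o|o g IH|o g IHg h IHh] /=.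
- by [].
- case/andP=> wg tg i.
  have [_ [_ [_ [_ [H1 _]]]]] := HTheta _ (Hs i).
  by rewrite H1 // IH.
- case/and4P=> wg tg wh th i.
  have [_ [_ [_ [_ [_ [_ H2]]]]]] := HTheta _ (Hs i).
  by rewrite H2 // IHg // IHh.
Qed.

Lemma InR_form (L : logic) (Model : Type) (sat : Model -> form L -> Prop)
  (C : Model -> Prop) (Theta : Model -> LMpair L)
  (HTheta : LCpair sat C Theta) (s : seq Model)
  (Hs : forall i : 'I_(size s), C (smodel i)) (X : semtuple Theta s) t :
  InR X t -> exists f, wf f /\ fty f = t /\
     forall i, X i = sem (Theta (smodel i)) f.
Proof.
elim.
- move=> o; by exists (FOp0 o).
- move=> o X' t' _ [g [wg [tg Hg]]] ht.
  exists (FOp1 o g); split; first by rewrite /= wg tg ht.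
  split=> // i.
  have [_ [_ [_ [_ [H1 _]]]]] := HTheta _ (Hs i).
  by rewrite H1 ?tg // Hg.
- move=> o X1 X2 t1 t2 _ [g [wg [tg Hg]]] ht1 _ [h [wh [th Hh]]] ht2.
  exists (FOp2 o g h); split; first by rewrite /= wg tg ht1 wh th ht2.
  split=> // i.
  have [_ [_ [_ [_ [_ [_ H2]]]]]] := HTheta _ (Hs i).
  by rewrite H2 ?tg ?th // Hg Hh.
Qed.

Lemma nth_In' (T : Type) (s : seq T) (x0 : T) j : (j < size s)%N -> List.In (nth x0 s j) s.
Proof.
elim: s j => [|x s IH] [|j] //= H; [by left | right; exact: IH].
Qed.

Lemma In_nth' (T : Type) (s : seq T) (x : T) : List.In x s ->
  exists j, (j < size s)%N /\ nth x s j = x.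
Proof.
elim: s => [|y s IH] //= [->|H]; first by exists 0%N.
have [j [Hj Hn]] := IH H; by exists j.+1.
Qed.

Lemma smodel_nth (Model : Type) (s : seq Model) (i : 'I_(size s)) x0 :
  smodel i = nth x0 s i.
Proof. by rewrite /smodel (tnth_nth x0). Qed.
Arguments smodel_nth {Model s} i x0.

Unset Implicit Arguments.
Theorem theorem2 (L : logic) (Model : Type) (sat : Model -> form L -> Prop)
  (C : Model -> Prop) (Theta : Model -> LMpair L)
  (HTheta : LCpair sat C Theta) (P N : seq Model) (HS : sample C P N) :
  accepts Theta P N <-> separable sat P N.
Proof.
have Hin : forall i : 'I_(size (P ++ N)),
    if (i < size P)%N then List.In (smodel i) P else List.In (smodel i) N.
  move=> i; rewrite (smodel_nth i (smodel i)) nth_cat.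
  case: ifP => Hi; rewrite Hi; first exact: nth_In'.
  apply: nth_In'; have := ltn_ord i; rewrite [X in (_ < X)%N -> _]size_cat; move: Hi; lia.
have Hs : forall i : 'I_(size (P ++ N)), C (smodel i).
  move=> i; have := Hin i; case: ifP => _; [exact: HS.1 | exact: HS.2].
split.
- case=> X [t [HR [Ht Hsat]]].
  have [f [wf_ [tf Hf]]] := InR_form HTheta Hs HR.
  have fin : is_final f by split; rewrite // tf.
  exists f; split=> //; split.
  + move=> M HM; have [j [Hj Hn]] := @In_nth' _ _ _ HM.
    have Hj' : (j < size (P ++ N))%N by rewrite size_cat; lia.
    pose i := Ordinal Hj'.
    have Hm : smodel i = M by rewrite (smodel_nth i M) nth_cat Hj.
    have := Hsat i; rewrite /= Hj Hf Hm.
    have [_ [_ [HS3 _]]] := HTheta M (HS.1 M HM).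
    by move/(HS3 f fin).
  + move=> M HM; have [j [Hj Hn]] := @In_nth' _ _ _ HM.
    have Hj' : (size P + j < size (P ++ N))%N by rewrite size_cat; lia.
    pose i := Ordinal Hj'.
    have Hm : smodel i = M.
      by rewrite (smodel_nth i M) nth_cat /= ltnNge leq_addr /= addKn.
    have := Hsat i; rewrite /= ltnNge leq_addr /= Hf Hm.
    have [_ [_ [HS3 _]]] := HTheta M (HS.2 M HM).
    by move=> /negP Hn' /(HS3 f fin).
- case=> f [[wf_ ff] [HP HN]].
  exists (evalX Theta (P ++ N) f), (fty f); split; first exact: evalX_InR.
  split=> // i; rewrite (@evalX_sem _ _ _ _ _ HTheta _ Hs _ wf_).
  have := Hin i; case: ifP => _ HM.
  + have [_ [_ [HS3 _]]] := HTheta _ (Hs i).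
    by apply/(HS3 f); [split | apply: HP].
  + have [_ [_ [HS3 _]]] := HTheta _ (Hs i).
    apply/negP => /(HS3 f (conj wf_ ff)); exact: HN.
Qed.
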